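(* Let $n\geq 1$, let $A\subseteq \mathbb{Z}^n$, and suppose $\dim \mathrm{Nb}(A)=d$ for some $d\in\mathbb{N}$. Then $\mathrm{Nb}(A)$ is locally finite; equivalently, every $a\in A$ has only finitely many $A$-neighbors.
   Context: For $a,b\in\mathbb{R}^n$, write $a \ll b$ if $\pi_i(a)<\pi_i(b)$ for all $i=1,\dots,n$, where $\pi_i$ is the $i$-th coordinate. For $B\subseteq\mathbb{R}^n$, $\vee B$ denotes the coordinatewise supremum in $(\mathbb{R}\cup\{\pm\infty\})^n$, i.e. $\pi_i(\vee B)=\sup\{\pi_i(b)\mid b\in B\}$. For $A\subseteq\mathbb{R}^n$, the neighbor complex $\mathrm{Nb}(A)$ is the set of all subsets $B\subseteq A$ such that there is no $a\in A$ with $a\ll \vee B$; it is an abstract simplicial complex on the vertex set $A$. Two points $a,a'\in A$ are called $A$-neighbors if $\{a,a'\}\in\mathrm{Nb}(A)$. For $B\in\mathrm{Nb}(A)$, $\dim B:=\mathrm{card}(B)-1$. We say $\dim\mathrm{Nb}(A)=d$ if $\dim B\leq d$ for all $B\in\mathrm{Nb}(A)$ and $\dim B=d$ for at least one $B\in\mathrm{Nb}(A)$. A simplicial complex is locally finite if each vertex is contained in only finitely many simplices. *)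

(* Defs.v *)
From HB Require Import structures.
From mathcomp Require Import all_boot all_order all_algebra.
Set Implicit Arguments. Unset Strict Implicit. Unset Printing Implicit Defensive.
Import Order.TTheory GRing.Theory Num.Theory.
Local Open Scope ring_scope.

Definition point (n : nat) := {ffun 'I_n -> int}.

(* Extended integers for the coordinatewise supremum of a FINITE set:
   None = -infinity (supremum of the empty set), Some m = m. *)
Definition vee (n : nat) (B : seq (point n)) (i : 'I_n) : option int :=
  foldr (fun (b : point n) (acc : option int) => Some (match acc with
                            | None => b i
                            | Some m => Num.max (b i) m end)) None B.

Definition ll (n : nat) (a : point n) (x : 'I_n -> option int) : Prop :=
  forall i : 'I_n, match x i with Some m => is_true (a i < m) | None => False end.

(* B (a finite subset of A, represented by a duplicate-free list) is a
   simplex of the neighbor complex Nb(A). *)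
Definition inNb (n : nat) (A : point n -> Prop) (B : seq (point n)) : Prop :=
  uniq B /\ (forall b, b \in B -> A b) /\ ~ (exists a, A a /\ ll a (vee B)).

(* dim Nb(A) = d  (dim B = card B - 1). *)
Definition dimNb (n : nat) (A : point n -> Prop) (d : nat) : Prop :=
  (forall B, inNb A B -> (size B <= d.+1)%N) /\
  (exists B, inNb A B /\ size B = d.+1).

Definition Aneighbor (n : nat) (A : point n -> Prop) (a a' : point n) : Prop :=
  inNb A (undup [:: a; a']).

(* Nb(A) is locally finite: each vertex lies in finitely many simplices
   (simplices as sets, i.e. lists up to permutation). *)
Definition locally_finite (n : nat) (A : point n -> Prop) : Prop :=
  forall a, A a -> exists S : seq (seq (point n)),
    forall B, inNb A B -> a \in B -> exists2 B', B' \in S & perm_eq B B'.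

Definition finitely_many_neighbors (n : nat) (A : point n -> Prop) : Prop :=
  forall a, A a -> exists s : seq (point n), forall a', Aneighbor A a a' -> a' \in s.

(* Main.v *)
Require Import Defs.
From HB Require Import structures.
From mathcomp Require Import all_boot all_order all_algebra.
From Stdlib Require Import Classical ClassicalEpsilon.
Set Implicit Arguments. Unset Strict Implicit. Unset Printing Implicit Defensive.
Import Order.TTheory GRing.Theory Num.Theory.

Definition incr (phi : nat -> nat) := forall j k, (j < k)%N -> (phi j < phi k)%N.

Lemma incr_mono phi : incr phi -> forall j k, (j <= k)%N -> (phi j <= phi k)%N.
Proof.
move=> I j k; rewrite leq_eqVlt => /orP [/eqP -> // | /I /ltnW //].
Qed.

Lemma incr_inj phi : incr phi -> injective phi.
Proof.
move=> I j k E; case: (ltngtP j k) => // /I; by rewrite E ltnn.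
Qed.

Lemma exmin (P : nat -> Prop) v : P v -> exists w, P w /\ forall u, P u -> (w <= u)%N.
Proof.
move: v; elim/ltn_ind => v IH Pv.
case: (classic (exists u, P u /\ (u < v)%N)) => [[u [Pu ltu]] | Hno].
  exact: IH ltu Pu.
exists v; split => // u Pu; rewrite leqNgt; apply/negP => ltuv; apply: Hno; by exists u.
Qed.

Lemma dickson1 (h : nat -> nat) : exists phi, incr phi /\
  forall j k, (j <= k)%N -> (h (phi j) <= h (phi k))%N.
Proof.
have Hsel : forall k, exists j, (k <= j)%N /\ forall j', (k <= j')%N -> (h j <= h j')%N.
  move=> k.
  have [v [[j [kj hj]] Hmin]] := @exmin (fun v => exists j, (k <= j)%N /\ h j = v) (h k)
    (ex_intro _ k (conj (leqnn k) erefl)).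
  exists j; split => // j' kj'; rewrite hj; apply: Hmin; by exists j'.
pose sel k := proj1_sig (constructive_indefinite_description _ (Hsel k)).
have selP k : (k <= sel k)%N /\ forall j', (k <= j')%N -> (h (sel k) <= h j')%N :=
  proj2_sig (constructive_indefinite_description _ (Hsel k)).
pose phi := fix phi j := if j is j'.+1 then sel (phi j').+1 else sel 0.
have step j : (phi j < phi j.+1)%N by have [+ _] := selP (phi j).+1.
have Q j j' : (phi j <= j')%N -> (h (phi j) <= h j')%N.
  case: j => [|j] /= Hj; first by apply: (selP 0).2.
  apply: (selP _).2; apply: leq_trans Hj; apply: (selP _).1.
have I : incr phi.
  move=> j k; elim: k => // k IH.
  rewrite ltnS leq_eqVlt => /orP [/eqP -> | /IH lt]; first exact: step.
  exact: ltn_trans lt (step k).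
exists phi; split => // j k jk; apply: Q; exact: incr_mono.
Qed.

Lemma dicksonn n (F : nat -> 'I_n -> nat) (s : seq 'I_n) : exists phi, incr phi /\
  forall i, i \in s -> forall j k, (j <= k)%N -> (F (phi j) i <= F (phi k) i)%N.
Proof.
elim: s => [|i0 s [phi [Iphi Mphi]]]; first by exists id; split.
have [psi [Ipsi Mpsi]] := dickson1 (fun k => F (phi k) i0).
exists (fun k => phi (psi k)); split; first by move=> j k jk; apply: Iphi; apply: Ipsi.
move=> i; rewrite in_cons => /orP [/eqP -> | his] j k jk; first exact: Mpsi.
apply: Mphi => //; exact: incr_mono.
Qed.

Section Inf.
Variables (T : eqType) (P : T -> Prop).
Hypothesis H : forall s : seq T, exists x, P x /\ x \notin s.
Definition hh (s : seq T) : T := proj1_sig (constructive_indefinite_description _ (H s)).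
Lemma hhP s : P (hh s) /\ hh s \notin s.
Proof. exact: proj2_sig (constructive_indefinite_description _ (H s)). Qed.
Fixpoint LL k := if k is k'.+1 then hh (LL k') :: LL k' else [::].
Lemma LL_in j k : (j < k)%N -> hh (LL j) \in LL k.
Proof.
elim: k => // k IH; rewrite ltnS leq_eqVlt => /orP [/eqP -> | /IH]; rewrite /= in_cons.
  by rewrite eqxx.
by move=> ->; rewrite orbT.
Qed.
Lemma infinite_seq : exists g : nat -> T, injective g /\ forall k, P (g k).
Proof.
exists (fun k => hh (LL k)); split; last by move=> k; exact: (hhP _).1.
move=> j k E; case: (ltngtP j k) => // ljk.
  have := LL_in ljk; rewrite E => Hin; have := (hhP (LL k)).2; by rewrite Hin.
have := LL_in ljk; rewrite -E => Hin; have := (hhP (LL j)).2; by rewrite Hin.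
Qed.
End Inf.

Fixpoint subs (T : Type) (s : seq T) : seq (seq T) :=
  if s is x :: s' then subs s' ++ map (cons x) (subs s') else [:: [::]].

Lemma filter_subs (T : eqType) (p : pred T) s : filter p s \in subs s.
Proof.
elim: s => [|x s IH] //=; rewrite mem_cat; case: (p x); last by rewrite IH.
by rewrite map_f ?orbT.
Qed.

Local Open Scope ring_scope.

Lemma vee_lt n (B : seq (point n)) (x : point n) i :
  (match vee B i with Some m => x i < m | None => False end) <->
  exists2 b, b \in B & x i < b i.
Proof.
elim: B => [|b B IH]; first by split => //; case.
change (vee (b :: B) i) with
  (Some (match vee B i with None => b i | Some m => Num.max (b i) m end)).
move: IH; case: (vee B i) => [m|] IH.
  rewrite lt_max; split.
    case/orP => [h | h]; first by exists b; rewrite ?mem_head.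
    have [b' hb' h'] := IH.1 h.
    by exists b' => //; rewrite in_cons hb' orbT.
  case=> b'; rewrite in_cons => /orP [/eqP -> -> // | hb' h].
  apply/orP; right; exact: (proj2 IH (ex_intro2 _ _ b' hb' h)).
split; first by exists b; rewrite ?mem_head.
case=> b'; rewrite in_cons => /orP [/eqP -> // | hb' h].
by case: (proj2 IH (ex_intro2 _ _ b' hb' h)).
Qed.

Lemma ll_vee n (B : seq (point n)) (x : point n) :
  ll x (vee B) <-> forall i, exists2 b, b \in B & x i < b i.
Proof.
split => h i; first by apply/vee_lt; exact: h.
by apply/vee_lt; exact: h.
Qed.

Lemma maxle (x y c : int) :
  (`|Num.max x c - c| <= `|Num.max y c - c|)%N -> Num.max x c <= Num.max y c.
Proof.
have h1 z : 0 <= Num.max z c - c by rewrite subr_ge0 le_max lexx orbT.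
by rewrite -lez_nat !gez0_abs ?h1 // lerD2r.
Qed.

Theorem mainTheorem1 (n : nat) (A : point n -> Prop) (d : nat) :
  (1 <= n)%N -> dimNb A d ->
  locally_finite A /\ finitely_many_neighbors A.
Proof.
move=> _ [Hdim _].
have Hnb : finitely_many_neighbors A.
  move=> a Aa; apply: NNPP => Hno.
  have H : forall s : seq (point n), exists a', Aneighbor A a a' /\ a' \notin s.
    move=> s; apply: NNPP => Hs; apply: Hno; exists s => a' Ha'.
    apply: NNPP => Hn; apply: Hs; exists a'; split => //; exact/negP.
  have [g [ginj gN]] := infinite_seq H.
  pose F k i := `|Num.max (g k i) (a i) - a i|%N.
  have [phi [phiI phiM]] := dicksonn F (enum 'I_n).
  pose B := map (fun k => g (phi k)) (iota 0 d.+2).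
  have : (size B <= d.+1)%N.
    apply: Hdim; split; [|split].
    - rewrite map_inj_uniq ?iota_uniq // => j k /ginj; exact: incr_inj.
    - move=> b /mapP [k _ ->]; have [_ [HA _]] := gN (phi k); apply: HA.
      by rewrite mem_undup in_cons mem_seq1 eqxx orbT.
    - move=> [x [Ax Hx]]; have [_ [_ Hn]] := gN (phi d.+1); apply: Hn.
      exists x; split => //; apply/ll_vee => i.
      move/ll_vee: Hx => /(_ i) [b /mapP [k Hk ->] Hxb].
      have Hk' : (k <= d.+1)%N by move: Hk; rewrite mem_iota add0n ltnS.
      have Hle := maxle (phiM i (mem_enum _ i) _ _ Hk').
      have : x i < Num.max (g (phi d.+1) i) (a i).
        apply: lt_le_trans Hle; apply: lt_le_trans Hxb _; by rewrite le_max lexx.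
      rewrite lt_max => /orP [h | h].
        by exists (g (phi d.+1)) => //; rewrite mem_undup in_cons mem_seq1 eqxx orbT.
      by exists a => //; rewrite mem_undup mem_head.
  by rewrite size_map size_iota ltnn.
split => //.
move=> a Aa; have [s Hs] := Hnb a Aa.
exists (subs (undup (a :: s))) => B [Bu [BA Bn]] aB.
exists (filter (fun x => x \in B) (undup (a :: s))); first exact: filter_subs.
apply: uniq_perm => //; first by rewrite filter_uniq ?undup_uniq.
move=> x; rewrite mem_filter mem_undup in_cons; case xB: (x \in B) => //.
rewrite andTb; apply/esym/orP; right; apply: Hs.
split; first exact: undup_uniq.
split.
  move=> b; rewrite mem_undup in_cons mem_seq1 => /orP [/eqP -> | /eqP ->]; exact: BA.
move=> [y [Ay Hy]]; apply: Bn; exists y; split => //; apply/ll_vee => i.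
move/ll_vee: Hy => /(_ i) [b hb h]; exists b => //.
by move: hb; rewrite mem_undup in_cons mem_seq1 => /orP [/eqP -> | /eqP ->].
Qed.
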